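(* Call a matrix in $GL_n(\mathbb{F}[t])$ an elementary unit of $\mathcal{M}$ if it is of one of the following types: (i) $\sum_{i\ne a}E_{ii}+\alpha E_{aa}$ for some $\alpha\in\mathbb{F}\setminus\{0\}$ and $a\in\{1,\dots,n\}$; (ii) $I_n+t^N\alpha E_{ab}$ for some $N\ge 0$, $\alpha\in\mathbb{F}$ and $1\le a<b\le n$; (iii) $I_n+t^N\alpha E_{ab}$ for some $N>0$, $\alpha\in\mathbb{F}$ and $1\le b<a\le n$. Then every matrix in $\mathcal{M}$ can be brought into semi-reduced form by left multiplication with finitely many elementary units of $\mathcal{M}$. Consequently, every unit $M\in\mathcal{M}^\times$ of the ring $\mathcal{M}$ is a product of elementary units of $\mathcal{M}$.
   Context: Let $\mathbb{F}$ be a finite field with $q$ elements and $n\geq 2$ a divisor of $q-1$. $\mathcal{M}=\{(m_{ab})\in\mathbb{F}[t]^{n\times n}\mid m_{ab}(0)=0\text{ for }1\le b<a\le n\}$, a subring of $\mathbb{F}[t]^{n\times n}$. $E_{ab}\in\mathbb{F}^{n\times n}$ is the matrix with $1$ at position $(a,b)$ and $0$ elsewhere; $GL_n(\mathbb{F}[t])$ is the set of $n\times n$ polynomial matrices with determinant in $\mathbb{F}\setminus\{0\}$. For $M=(m_{ab})\in\mathcal{M}$ with $d_{ab}=\deg m_{ab}$ ($\deg 0=-\infty$), the degree matrix $\mathcal{D}(M)$ has entries $\mathcal{D}(M)_{ab}=nd_{ab}-a+b\in\mathbb{N}_0\cup\{-\infty\}$; a row of $\mathcal{D}(M)$ is trivial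 if all its entries are $-\infty$; $M$ is semi-reduced if the maxima of the non-trivial rows of $\mathcal{D}(M)$ lie in pairwise different columns. *)

(* Defs.v *)
From HB Require Import structures.
From mathcomp Require Import all_boot all_order all_algebra all_field.
Set Implicit Arguments. Unset Strict Implicit. Unset Printing Implicit Defensive.
Import GRing.Theory Num.Theory.
Local Open Scope ring_scope.

(* Matrices are indexed by 'I_n (0-based); all conditions only involve
   comparisons a < b or differences b - a of indices, hence are invariant
   under the shift from {1..n} to {0..n-1}. *)

Section Defs.
Variables (F : finFieldType) (n : nat).

Definition polymx := 'M[{poly F}]_n.

Definition inM (M : polymx) : Prop :=
  forall a b : 'I_n, (b < a)%N -> (M a b).[0] = 0.

Definition unitM (M : polymx) : Prop :=
  inM M /\ exists N : polymx, inM N /\ M *m N = 1%:M /\ N *m M = 1%:M.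

Definition Emx (a b : 'I_n) : polymx := delta_mx a b.

Definition elementary_unit (E : polymx) : Prop :=
  (exists (alpha : F) (a : 'I_n), alpha != 0 /\
     E = \sum_(i < n | i != a) Emx i i + alpha%:P *: Emx a a)
  \/ (exists (N : nat) (alpha : F) (a b : 'I_n), (a < b)%N /\
     E = 1%:M + ('X^N * alpha%:P) *: Emx a b)
  \/ (exists (N : nat) (alpha : F) (a b : 'I_n), (0 < N)%N /\ (b < a)%N /\
     E = 1%:M + ('X^N * alpha%:P) *: Emx a b).

Definition mxprod (s : seq polymx) : polymx := foldr mulmx 1%:M s.

(* Degree matrix entry D(M)_{ab} = n * deg m_ab - a + b, for m_ab != 0
   (entries with m_ab = 0 are -infinity and handled separately). *)
Definition Dentry (M : polymx) (a b : 'I_n) : int :=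
  (n * (size (M a b)).-1)%:Z - (a : nat)%:Z + (b : nat)%:Z.

Definition nontrivial_row (M : polymx) (a : 'I_n) : Prop :=
  exists b : 'I_n, M a b != 0.

Definition row_max_at (M : polymx) (a b : 'I_n) : Prop :=
  M a b != 0 /\ forall b' : 'I_n, M a b' != 0 -> Dentry M a b' <= Dentry M a b.

Definition semi_reduced (M : polymx) : Prop :=
  forall a a' b b' : 'I_n, a != a' ->
    row_max_at M a b -> row_max_at M a' b' -> b != b'.

End Defs.

(* Main.v *)
Require Import Defs.
From HB Require Import structures.
From mathcomp Require Import all_boot all_order all_algebra all_field perm zify.
From Stdlib Require Import Classical.
Set Implicit Arguments. Unset Strict Implicit. Unset Printing Implicit Defensive.
Import Order.TTheory GRing.Theory Num.Theory.
Local Open Scope ring_scope.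

Section Part1.
Variables (F : finFieldType) (n : nat).
Implicit Types (M : polymx F n) (a b c : 'I_n).

Definition Dn M a b : nat := (n * (size (M a b)).-1 + b + (n - a))%N.
Definition rowm M a : nat := (\max_(b | M a b != 0%R) Dn M a b)%N.
Definition mu M : nat := (\sum_a rowm M a)%N.

Lemma Dentry_Dn M a b : Dentry M a b = (Dn M a b)%:Z - n%:Z.
Proof.
rewrite /Dentry /Dn; have := ltn_ord a; move: (n * _)%N => k; lia.
Qed.

Lemma Dn_inj M M' a b c : Dn M a c = Dn M' a b -> c = b.
Proof.
rewrite /Dn => /eqP; rewrite eqn_add2r => /eqP H.
apply/val_inj => /=.
have := congr1 (modn^~ n) H.
rewrite !(mulnC n) !modnMDl !modn_small //.
Qed.

Lemma Dn_pos M a b : (0 < Dn M a b)%N.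
Proof. rewrite /Dn addn_gt0 subn_gt0 ltn_ord orbT //. Qed.

Lemma row_maxE M a b : row_max_at M a b <-> (M a b != 0 /\ Dn M a b = rowm M a).
Proof.
split.
- move=> [nz H]; split => //; apply/eqP; rewrite eqn_leq leq_bigmax_cond //=.
  apply/bigmax_leqP => b' nz'; have := H b' nz'; rewrite !Dentry_Dn.
  by rewrite lerD2r lez_nat.
- move=> [nz H]; split => // b' nz'; rewrite !Dentry_Dn lerD2r lez_nat H.
  exact: leq_bigmax_cond.
Qed.

Lemma rowm_ge M a b : M a b != 0 -> (Dn M a b <= rowm M a)%N.
Proof. move=> nz; exact: leq_bigmax_cond. Qed.

Lemma rowm_lt M a b : M a b != 0 -> Dn M a b != rowm M a ->
  row_max_at M a b \/ (Dn M a b < rowm M a)%N.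
Proof. move=> nz ne; right; rewrite ltn_neqAle ne rowm_ge //. Qed.

Lemma rowm_max M a : nontrivial_row M a -> exists b, row_max_at M a b.
Proof.
move=> [b0 nz0].
have [|b Hb Hm] := @eq_bigmax_cond _ (fun b => M a b != 0) (Dn M a).
  by apply/card_gt0P; exists b0.
by exists b; apply/row_maxE; split.
Qed.


Lemma cancel_size (p q : {poly F}) : p != 0 -> size q = size p ->
  lead_coef p + lead_coef q = 0 -> (size (p + q)%R < size p)%N.
Proof.
move=> nz eqs hl; have sp : (0 < size p)%N by rewrite size_poly_gt0.
rewrite -(prednK sp) ltnS; apply/leq_sizeP => j hj.
rewrite coefD; move: hj; rewrite leq_eqVlt => /orP [/eqP <-|hj].
  by rewrite -lead_coefE -eqs -lead_coefE.
rewrite !nth_default //; first by rewrite addr0.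
  by rewrite eqs -(prednK sp).
by rewrite -(prednK sp).
Qed.

Lemma mulE_entry M (cc : {poly F}) a a' i j :
  ((1%:M + cc *: Emx F a' a) *m M) i j = M i j + (if i == a' then cc * M a j else 0).
Proof.
rewrite mulmxDl mul1mx -scalemxAl !mxE; congr (_ + _).
rewrite (bigD1 a) //= big1 ?addr0 => [|k nk]; last by rewrite /Emx mxE (negbTE nk) andbF mul0r.
by rewrite /Emx mxE eqxx andbT; case: (i == a'); rewrite ?mul1r ?mul0r ?mulr0.
Qed.

Lemma rowm_ext M M' a : (forall j, M' a j = M a j) -> rowm M' a = rowm M a.
Proof.
move=> H; rewrite /rowm /Dn.
under eq_bigl do rewrite H. by under eq_bigr do rewrite H.
Qed.

Lemma rowm_ltP M a m : (0 < m)%N -> (forall j, M a j != 0 -> (Dn M a j < m)%N) ->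
  (rowm M a < m)%N.
Proof.
move=> m0 H; rewrite -(prednK m0) ltnS; apply/bigmax_leqP => j nz.
by rewrite -ltnS (prednK m0) H.
Qed.


Lemma step M a a' b : a != a' -> row_max_at M a b -> row_max_at M a' b ->
  (Dn M a b <= Dn M a' b)%N ->
  exists E, elementary_unit E /\ (mu (E *m M) < mu M)%N.
Proof.
move=> naa /row_maxE [nzq hq] /row_maxE [nzp hp] hle.
set p := M a' b in nzp hp *; set q := M a b in nzq hq *.
set dp := (size p).-1; set dq := (size q).-1.
have n0 : (0 < n)%N by apply: leq_ltn_trans (ltn_ord a).
have ha := ltn_ord a; have ha' := ltn_ord a'.
have hle' : (n * dq + (n - a) <= n * dp + (n - a'))%N.
  by move: hle; rewrite /Dn -/p -/q -/dp -/dq; lia.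
have dqp : (dq <= dp)%N.
  rewrite leqNgt; apply/negP => lt.
  have : (n * dp.+1 <= n * dq)%N by rewrite leq_mul2l lt orbT.
  rewrite mulnS; lia.
set N := (dp - dq)%N.
have dpE : dp = (N + dq)%N by rewrite /N subnK.
set alpha := - lead_coef p / lead_coef q.
have sp0 : (0 < size p)%N by rewrite size_poly_gt0.
have sq0 : (0 < size q)%N by rewrite size_poly_gt0.
have lp0 : lead_coef p != 0 by rewrite lead_coef_eq0.
have lq0 : lead_coef q != 0 by rewrite lead_coef_eq0.
have al0 : alpha != 0 by rewrite /alpha mulf_eq0 invr_eq0 oppr_eq0 negb_or lp0 lq0.
set E := 1%:M + ('X^N * alpha%:P) *: Emx F a' a.
exists E; split.
  case: (ltngtP a a') => [lt|gt|eq]; last by move: naa => /eqP []; apply: val_inj.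
  - right; right; exists N, alpha, a', a; split; last by split.
    rewrite lt0n; apply/eqP => N0.
    move: hle'; rewrite dpE N0 add0n; lia.
  - right; left; exists N, alpha, a', a; split => //.
have entry j i : (E *m M) i j = M i j + (if i == a' then (alpha *: M a j) * 'X^N else 0).
  rewrite mulE_entry; case: (i == a') => //.
  by rewrite -mul_polyC [in RHS]mulrC [in RHS]mulrA.
have rows i : i != a' -> rowm (E *m M) i = rowm M i.
  by move=> ni; apply: rowm_ext => j; rewrite entry (negbTE ni) addr0.
have key : (rowm (E *m M) a' < rowm M a')%N.
  rewrite -hp; apply: rowm_ltP; first exact: Dn_pos.
  move=> j; rewrite /Dn entry eqxx => nzr.
  set r := (_ + _) in nzr *.
  have sr : (0 < size r)%N by rewrite size_poly_gt0.
  have [jb|njb] := eqVneq j b.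
  - subst j.
    have qz : alpha *: q != 0 by rewrite scaler_eq0 negb_or (negbTE al0) nzq.
    have spq : size p = (size q + N)%N.
      rewrite -[size p](prednK sp0) -[size q](prednK sq0).
      rewrite -/dp -/dq dpE; lia.
    have szq : size (alpha *: q * 'X^N) = size p by rewrite size_mulXn // size_scale // spq addnC.
    have sz : (size r < size p)%N.
      rewrite /r -/p -/q; apply: cancel_size => //.
      rewrite [lead_coef (_ * _)]lead_coefE szq coefMXn spq.
      have -> : ((size q + N).-1 < N)%N = false.
        by apply/negbTE; rewrite -leqNgt; lia.
      have -> : ((size q + N).-1 - N = (size q).-1)%N.
        by lia.
      by rewrite coefZ -lead_coefE /alpha divfK // addrN.
    rewrite /Dn -/p !ltn_add2r ltn_pmul2l //; lia.
  - have hs := size_polyD (M a' j) (alpha *: M a j * 'X^N).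
    have hpb : Dn M a' b = (n * dp + b + (n - a'))%N by [].
    case: (leqP (size (alpha *: M a j * 'X^N)) (size (M a' j))) => hc.
    + have szr : (size r <= size (M a' j))%N by move: hs; rewrite /r (maxn_idPl hc).
      have nz1 : M a' j != 0 by rewrite -size_poly_gt0; apply: leq_trans szr.
      have h1 : (Dn M a' j < Dn M a' b)%N.
        rewrite hp ltn_neqAle rowm_ge // andbT -hp.
        by apply/eqP => /Dn_inj; apply/eqP.
      move: h1; rewrite hpb /Dn.
      have : (n * (size r).-1 <= n * (size (M a' j)).-1)%N.
        by rewrite leq_mul2l -!subn1 leq_sub2r // orbT.
      rewrite -/p -/dp; lia.
    + have szr : (size r <= size (alpha *: M a j * 'X^N)%R)%N
        by move: hs; rewrite /r (maxn_idPr (ltnW hc)).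
      have nz1 : M a j != 0.
        apply/eqP => e; move: szr; rewrite e scaler0 mul0r size_poly0.
        by rewrite leqNgt sr.
      have qz : alpha *: M a j != 0 by rewrite scaler_eq0 negb_or (negbTE al0) nz1.
      move: szr; rewrite size_mulXn // size_scale // => szr.
      have h1 : (Dn M a j < Dn M a b)%N.
        rewrite hq ltn_neqAle rowm_ge // andbT -hq.
        by apply/eqP => /Dn_inj; apply/eqP.
      move: h1; rewrite /Dn -/q -/dq ltn_add2r.
      have : (n * (size r).-1 <= n * (N + (size (M a j)).-1))%N.
        rewrite leq_mul2l; apply/orP; right.
        have : (0 < size (M a j))%N by rewrite size_poly_gt0.
        move: szr; move: (size r) => x; move: (size (M a j)) => y. lia.
      rewrite -/p -/dp dpE !mulnDr; lia.
rewrite /mu (bigD1 a') //= [X in (_ < X)%N](bigD1 a') //=.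
rewrite (eq_bigr (fun i => rowm M i)); last by move=> i; exact: rows.
by rewrite ltn_add2r.
Qed.


Lemma mxprod_cat (s1 s2 : seq (polymx F n)) : mxprod (s1 ++ s2) = mxprod s1 *m mxprod s2.
Proof. by elim: s1 => [|E s IH] /=; rewrite ?mul1mx // /mxprod /= -mulmxA -IH. Qed.

Lemma mxprod_rcons (s : seq (polymx F n)) E : mxprod (rcons s E) = mxprod s *m E.
Proof. by rewrite -cats1 mxprod_cat /mxprod /= mulmx1. Qed.

Lemma part1 M : exists s : seq (polymx F n),
  (forall E, E \in s -> elementary_unit E) /\ semi_reduced (mxprod s *m M).
Proof.
have [k] := ubnP (mu M); elim: k M => // k IH M hk.
case: (classic (semi_reduced M)) => [sr|nsr].
  by exists [::]; split => //; rewrite /mxprod /= mul1mx.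
have [a [a' [b [naa [h1 h2]]]]] :
    exists a a' b, a != a' /\ row_max_at M a b /\ row_max_at M a' b.
  apply: NNPP => H; apply: nsr => a a' b b' naa h1 h2; apply/eqP => eb.
  by apply: H; exists a, a', b; subst b'.
have [E [el lt]] : exists E, elementary_unit E /\ (mu (E *m M) < mu M)%N.
  case: (leqP (Dn M a b) (Dn M a' b)) => hl.
    exact: step h1 h2 hl.
  by apply: (step _ h2 h1 (ltnW hl)); rewrite eq_sym.
have [s [hs sr]] := IH (E *m M) (leq_trans lt hk).
exists (rcons s E); split.
  by move=> E0; rewrite mem_rcons in_cons => /orP [/eqP ->|/hs].
by rewrite mxprod_rcons -mulmxA.
Qed.

End Part1.

Section Part2.
Variables (F : finFieldType) (n : nat).
Implicit Types (M : polymx F n) (a b c : 'I_n).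

Definition dmx (d : 'I_n -> {poly F}) : polymx F n :=
  \matrix_(i, j) if i == j then d i else 0.

Lemma dmx_mul d1 d2 : dmx d1 *m dmx d2 = dmx (fun i => d1 i * d2 i).
Proof.
apply/matrixP => i j; rewrite !mxE (bigD1 i) //= big1 => [|k nk].
  by rewrite !mxE eqxx; case: (i == j); rewrite ?mulr0 addr0.
by rewrite !mxE eq_sym (negbTE nk) mul0r.
Qed.

Lemma eq_dmx d1 d2 : (forall i, d1 i = d2 i) -> dmx d1 = dmx d2.
Proof. by move=> H; apply/matrixP => i j; rewrite !mxE H. Qed.

Lemma dmx1 : dmx (fun _ => 1) = 1%:M.
Proof. by apply/matrixP => i j; rewrite !mxE; case: (i == j). Qed.

Lemma sum_delta a x y : \sum_(i < n | i != a) (((x == i) && (y == i))%:R : {poly F})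
   = ((x == y) && (x != a))%:R.
Proof.
case: (eqVneq x y) => [<-|nxy] /=.
  case: (eqVneq x a) => [->|nxa].
    by rewrite big1 // => i ni; rewrite eq_sym (negbTE ni).
  rewrite (bigD1 x) //= eqxx big1 ?addr0 // => i /andP [_ ni].
  by rewrite eq_sym (negbTE ni).
rewrite big1 // => i _; case: (eqVneq x i) => [ex|] //=; subst.
by rewrite eq_sym (negbTE nxy).
Qed.

Lemma dgE a (al : F) : \sum_(i < n | i != a) Emx F i i + al%:P *: Emx F a a
  = dmx (fun i => if i == a then al%:P else 1).
Proof.
apply/matrixP => x y; rewrite !mxE summxE /Emx.
under eq_bigr do rewrite mxE.
rewrite sum_delta; case: (eqVneq x y) => [e|nxy] /=; first subst y.
  by case: (eqVneq x a) => [e|nxa] /=; rewrite ?e; rewrite ?eqxx ?andbT /= ?mulr1 ?add0r ?mulr0 ?addr0.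
case: (eqVneq x a) => [ex|]; last by rewrite mulr0 addr0.
subst x. by rewrite eq_sym (negbTE nxy) mulr0 addr0.
Qed.

Lemma inM_mul M1 M2 : inM M1 -> inM M2 -> inM (M1 *m M2).
Proof.
move=> h1 h2 a b ba; rewrite mxE horner_sum big1 // => c _.
rewrite hornerM; case: (ltnP c a) => ca; first by rewrite h1 // mul0r.
by rewrite h2 ?mulr0 //; apply: leq_trans ca.
Qed.

Lemma inM1 : @inM F n 1%:M.
Proof. move=> a b ba; rewrite mxE; case: (eqVneq a b) => [e|]; last by rewrite hornerE. 
by move: ba; rewrite e ltnn.
Qed.

Lemma inM_dmx d : inM (dmx d).
Proof. move=> a b ba; rewrite mxE; case: (eqVneq a b) => [e|]; last by rewrite hornerE.
by move: ba; rewrite e ltnn.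
Qed.

Lemma el_inM (E : polymx F n) : elementary_unit E -> inM E.
Proof.
case=> [[al [a [_ ->]]]|[[N [al [x [y [xy ->]]]]]|[N [al [x [y [N0 [yx ->]]]]]]]].
- by rewrite dgE; apply: inM_dmx.
- move=> a b ba; rewrite !mxE.
  have -> : (a == b) = false by apply/negbTE; apply/eqP => e; move: ba; rewrite e ltnn.
  have -> : ((a == x) && (b == y)) = false.
    apply/negbTE/andP => [[/eqP ea /eqP eb]].
    by move: ba xy; rewrite ea eb => h1 h2; have := ltn_trans h1 h2; rewrite ltnn.
  by rewrite mulr0 addr0 hornerE.
- move=> a b ba; rewrite !mxE.
  have -> : (a == b) = false by apply/negbTE; apply/eqP => e; move: ba; rewrite e ltnn.
  rewrite add0r !hornerE expr0n.
  by rewrite eqn0Ngt N0 /= !mul0r.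
Qed.


Lemma prod_inM (s : seq (polymx F n)) : (forall E, E \in s -> elementary_unit E) ->
  inM (mxprod s).
Proof.
elim: s => [|E s IH] hs; first exact: inM1.
rewrite /mxprod /= -/(mxprod s); apply: inM_mul.
  by apply: el_inM; apply: hs; rewrite mem_head.
by apply: IH => E0 h; apply: hs; rewrite in_cons h orbT.
Qed.

Lemma el_inv (E : polymx F n) : elementary_unit E ->
  exists E', elementary_unit E' /\ E' *m E = 1%:M.
Proof.
case=> [[al [a [al0 ->]]]|[[N [al [x [y [xy ->]]]]]|[N [al [x [y [N0 [yx ->]]]]]]]].
- exists (\sum_(i < n | i != a) Emx F i i + al^-1%:P *: Emx F a a); split.
    by left; exists al^-1, a; split => //; rewrite invr_eq0.
  rewrite !dgE dmx_mul -dmx1; apply: eq_dmx => i.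
  by case: (i == a); rewrite ?mulr1 // -polyCM mulVf.
- exists (1%:M + ('X^N * (-al)%:P) *: Emx F x y); split.
    by right; left; exists N, (-al), x, y.
  rewrite mulmxDl mul1mx mulmxDr mulmx1 -scalemxAl -scalemxAr /Emx mul_delta_mx_0.
    by rewrite scaler0 scaler0 addr0 -addrA -scalerDl polyCN mulrN subrr scale0r addr0.
  by apply/eqP => e; move: xy; rewrite e ltnn.
- exists (1%:M + ('X^N * (-al)%:P) *: Emx F x y); split.
    by right; right; exists N, (-al), x, y.
  rewrite mulmxDl mul1mx mulmxDr mulmx1 -scalemxAl -scalemxAr /Emx mul_delta_mx_0.
    by rewrite scaler0 scaler0 addr0 -addrA -scalerDl polyCN mulrN subrr scale0r addr0.
  by apply/eqP => e; move: yx; rewrite e ltnn.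
Qed.

Lemma prod_inv (s : seq (polymx F n)) : (forall E, E \in s -> elementary_unit E) ->
  exists s', (forall E, E \in s' -> elementary_unit E) /\ mxprod s' *m mxprod s = 1%:M.
Proof.
elim: s => [|E s IH] hs.
  by exists [::]; split => //; rewrite /mxprod /= mulmx1.
have [s' [hs' e']] := IH (fun E0 h => hs E0 (@mem_behead _ (E :: s) E0 h)).
have [E' [hE' eE]] := el_inv (hs E (mem_head _ _)).
exists (s' ++ [:: E']); split.
  by move=> E0; rewrite mem_cat => /orP [/hs'|]; rewrite ?inE // => /eqP ->.
rewrite mxprod_cat /mxprod /= -/(mxprod s) -/(mxprod s') mulmx1.
by rewrite -mulmxA (mulmxA E') eE mul1mx.
Qed.

Lemma dmx_prod (d : 'I_n -> F) : (forall i, d i != 0) ->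
  exists s : seq (polymx F n), (forall E, E \in s -> elementary_unit E) /\
    dmx (fun i => (d i)%:P) = mxprod s.
Proof.
move=> dnz.
pose g a := \sum_(i < n | i != a) Emx F i i + (d a)%:P *: Emx F a a.
have gen (r : seq 'I_n) : uniq r ->
    mxprod (map g r) = dmx (fun i => if i \in r then (d i)%:P else 1).
  elim: r => [|a r IH] /=; first by rewrite dmx1.
  move=> /andP [ar ur]; rewrite /mxprod /= -/(mxprod _) IH // /g dgE dmx_mul.
  apply: eq_dmx => i; rewrite in_cons.
  case: (eqVneq i a) => [->|ia] /=; first by rewrite (negbTE ar) mulr1.
  by rewrite mul1r.
exists (map g (enum 'I_n)); split.
  move=> E /mapP [a _ ->]; left; exists (d a), a; split => //.
rewrite gen ?enum_uniq //; apply: eq_dmx => i.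
by rewrite mem_enum.
Qed.

End Part2.

Lemma sum_ltn (I : finType) (f g : I -> nat) j : (forall i, f i <= g i)%N ->
  (f j < g j)%N -> (\sum_i f i < \sum_i g i)%N.
Proof.
move=> H hj; rewrite (bigD1 j) //= [X in (_ < X)%N](bigD1 j) //=.
have : (\sum_(i | i != j) f i <= \sum_(i | i != j) g i)%N by apply: leq_sum => i _; apply: H.
lia.
Qed.

Lemma sign_coef (R : nzRingType) (b : bool) (p : {poly R}) k : p`_k = 0 -> ((-1) ^+ b * p)`_k = 0.
Proof. by move=> h; rewrite mulr_sign; case: b; rewrite ?coefN h ?oppr0. Qed.

Section Part3.
Variables (F : finFieldType) (n : nat).
Implicit Types (M : polymx F n) (a b c : 'I_n).

Lemma semi_unit_diag M : inM M -> M \in unitmx -> semi_reduced M ->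
  (forall i, (M i i)`_0 != 0) /\ M = dmx (fun i => ((M i i)`_0)%:P).
Proof.
move=> hM hU hS.
have nt a : nontrivial_row M a.
  apply: NNPP => H; have := mulmxV hU; move/matrixP => /(_ a a).
  rewrite !mxE big1 ?eqxx => [|k _].
    by rewrite mulr1n => /eqP; rewrite eq_sym oner_eq0.
  have -> : M a k = 0 by apply/eqP/negPn/negP => nz; apply: H; exists k.
  by rewrite mul0r.
pose P a b := (M a b != 0) && (Dn M a b == rowm M a).
pose tau a := odflt a [pick b | P a b].
have tauP a : row_max_at M a (tau a).
  rewrite /tau; case: pickP => [b /andP [nz /eqP e]|H] /=; first by apply/row_maxE.
  have [b /row_maxE [nz e]] := rowm_max (nt a).
  by have := H b; rewrite /P nz e eqxx.
have tinj : injective tau.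
  move=> a a' e; apply/eqP; apply: NNPP => /negP ne.
  by have := hS a a' (tau a) (tau a') ne (tauP a) (tauP a'); rewrite e eqxx.
pose s0 := perm tinj.
have s0E i : s0 i = tau i by apply: permE.
pose d a b := (size (M a b)).-1.
pose K := (\sum_i d i (tau i))%N.
have sumDn (f : 'I_n -> 'I_n) : injective f -> (\sum_i Dn M i (f i) =
    n * (\sum_i d i (f i)) + \sum_(i < n) (i : nat) + \sum_(i < n) (n - i))%N.
  move=> finj; rewrite /Dn !big_split /= -big_distrr /=; congr (_ + _ + _).
  by rewrite [RHS](reindex_inj finj).
have hdet : (\det M)`_K != 0.
  have detE : \det M = \sum_(s : 'S_n) (-1) ^+ s * \prod_i M i (s i) by [].
  rewrite detE coef_sum (bigD1 s0) //= [X in _ + X]big1 ?addr0.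
  - have nz i : M i (s0 i) != 0 by rewrite s0E; case: (tauP i).
    have sz : size (\prod_i M i (s0 i)) = K.+1.
      rewrite size_prod => [|i _]; last exact: nz.
      rewrite cardT size_enum_ord.
      have -> : (\sum_i size (M i (s0 i)) = \sum_i (d i (tau i) + 1))%N.
        apply: eq_bigr => i _; rewrite addn1 s0E /d prednK // size_poly_gt0 -s0E; exact: nz.
      by rewrite big_split /= sum1_card cardT size_enum_ord -/K; lia.
    have : (\prod_i M i (s0 i))`_K != 0.
      rewrite -[K]/(K.+1.-1) -sz -lead_coefE lead_coef_eq0.
      by apply/prodf_neq0 => i _; exact: nz.
    by rewrite mulr_sign; case: (perm.odd_perm s0); rewrite ?coefN ?oppr_eq0.
  - move=> s ns; apply: sign_coef.
    case: (boolP [forall i, M i (s i) != 0]) => [/forallP nz|]; last first.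
      rewrite negb_forall => /existsP [i /negPn /eqP z].
      by rewrite (bigD1 i) //= z mul0r coef0.
    have [j hj] : exists j, s j != s0 j.
      apply: NNPP => H; move/eqP: ns; apply; apply/permP => i.
      by apply/eqP/negPn/negP => nn; apply: H; exists i.
    have n0 : (0 < n)%N by apply: leq_ltn_trans (ltn_ord j).
    have lt : (\sum_i Dn M i (s i) < \sum_i Dn M i (s0 i))%N.
      apply: (@sum_ltn _ _ _ j) => [i|].
        by rewrite s0E; case/row_maxE: (tauP i) => _ ->; apply: rowm_ge.
      rewrite s0E; case/row_maxE: (tauP j) => _ e; rewrite e.
      rewrite ltn_neqAle rowm_ge // andbT -e; apply/eqP => /Dn_inj.
      by move/eqP; rewrite -s0E (negbTE hj).
    move: lt; rewrite (sumDn _ (@perm_inj _ s)) (sumDn _ (@perm_inj _ s0)).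
    rewrite ltn_add2r ltn_add2r ltn_pmul2l //.
    have -> : (\sum_i d i (s0 i) = K)%N by apply: eq_bigr => i _; rewrite s0E.
    move=> lt; apply: nth_default.
    rewrite size_prod => [|i _]; last exact: nz.
    rewrite cardT size_enum_ord.
    have -> : (\sum_i size (M i (s i)) = \sum_i (d i (s i) + 1))%N.
      by apply: eq_bigr => i _; rewrite addn1 /d prednK // size_poly_gt0.
    by rewrite big_split /= sum_nat_const card_ord muln1 -addSn addnK.
have sz1 : size (\det M) = 1%N.
  by move: hU; rewrite unitmxE poly_unitE => /andP [/eqP].
have K0 : K = 0%N.
  apply/eqP; rewrite -leqn0 -ltnS -sz1 ltnNge; apply/negP => h.
  by move: hdet; rewrite nth_default // eqxx.
have d0 i : d i (tau i) = 0%N.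
  by move/eqP: K0; rewrite sum_nat_eq0 => /forallP /(_ i) /eqP.
have cst a b : M a b != 0 -> d a b = 0%N -> (M a b).[0] != 0.
  move=> nz da.
  have h : (size (M a b) <= 1)%N by move: da; rewrite /d; lia.
  move: nz; rewrite (size1_polyC h) hornerC polyC_eq0 //.
have tge (i : 'I_n) : (i <= tau i)%N.
  rewrite leqNgt; apply/negP => lt.
  have := hM i (tau i) lt; case: (tauP i) => nz _.
  by move/eqP; apply/negP; apply: cst.
have tid (i : 'I_n) : tau i = i.
  apply/val_inj/eqP; rewrite /= eqn_leq tge andbT; apply/negP => /negP.
  rewrite -ltnNge => lt.
  have : (\sum_(k < n) (k : nat) < \sum_(k < n) (tau k : nat))%N.
    by apply: (@sum_ltn _ _ _ i).
  have e : (\sum_(k < n) (tau k : nat) = \sum_(k < n) (k : nat))%N.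
    by rewrite [RHS](reindex_inj tinj).
  by rewrite e ltnn.
have zero (i j : 'I_n) : i != j -> M i j = 0.
  move=> ij; apply/eqP/negPn/negP => nz.
  have hmax := tauP i; rewrite tid in hmax; case/row_maxE: hmax => _ e.
  have : (Dn M i j < Dn M i i)%N.
    rewrite ltn_neqAle e rowm_ge // andbT -e; apply/eqP => /Dn_inj /eqP.
    by rewrite eq_sym (negbTE ij).
  have := d0 i; rewrite tid /Dn /d => ->; rewrite muln0 add0n ltn_add2r => lt.
  have dz : d i j = 0%N.
    apply/eqP; rewrite -leqn0 leqNgt; apply/negP => dp.
    have : (n <= n * d i j)%N by rewrite leq_pmulr.
    move: lt; rewrite /d; have := ltn_ord i; lia.
  have ji : (j < i)%N by move: lt; rewrite /d -/(d i j) dz muln0 add0n.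
  by move: (hM i j ji) => /eqP; apply/negP; apply: cst.
have diag (i : 'I_n) : M i i = ((M i i)`_0)%:P.
  by apply: size1_polyC; have := d0 i; rewrite tid /d; lia.
split.
  move=> i; have := (tauP i).1; rewrite tid.
  by rewrite {1}diag polyC_eq0.
apply/matrixP => i j; rewrite mxE; case: (eqVneq i j) => [e|ij]; last exact: zero.
by subst j; rewrite -diag.
Qed.

End Part3.

Theorem theorem3p13 (F : finFieldType) (n : nat)
  (hn : (2 <= n)%N) (hdiv : (n %| #|F|.-1)%N) :
  (forall M : polymx F n, inM M ->
     exists s : seq (polymx F n),
       (forall E, E \in s -> elementary_unit E) /\ semi_reduced (mxprod s *m M))
  /\
  (forall M : polymx F n, unitM M ->
     exists s : seq (polymx F n),
       (forall E, E \in s -> elementary_unit E) /\ M = mxprod s).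
Proof.
split; first by move=> M _; apply: part1.
move=> M [hM [N [hN [e1 e2]]]].
have [s [hs sr]] := part1 M.
have hM' : inM (mxprod s *m M) by apply: inM_mul => //; apply: prod_inM.
have [s' [hs' e']] := prod_inv hs.
have uM' : mxprod s *m M \in unitmx.
  rewrite unitmx_mul; apply/andP; split.
    by case: (mulmx1_unit e').
  by case: (mulmx1_unit e1).
have [nz eM'] := semi_unit_diag hM' uM' sr.
have [sd [hsd esd]] := dmx_prod nz.
exists (s' ++ sd); split.
  by move=> E; rewrite mem_cat => /orP [/hs'|/hsd].
by rewrite mxprod_cat -esd -eM' mulmxA e' mul1mx.
Qed.
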